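(* A class $\mathcal{C}$ of graphs has tree rank at most $2$ if and only if it has locally almost bounded degree.
   Context: $T_{d,m}$ is the rooted tree of depth $d$ (all leaf-to-root paths have $d$ edges) in which every non-leaf vertex has exactly $m$ children. $H$ is an $r$-shallow topological minor of $G$ if $G$ has a subgraph isomorphic to a graph obtained from $H$ by replacing each edge by a path with at most $r$ internal vertices (paths internally disjoint). A class has tree rank at most $d$ if for every $r\in\mathbb{N}$ there is $m\in\mathbb{N}$ such that no graph of the class contains $T_{d,m}$ as an $r$-shallow topological minor. $N_r^G(v)$ is the closed $r$-neighborhood of $v$ (vertices at distance at most $r$ from $v$, including $v$). A class $\mathcal{C}$ has locally almost bounded degree if there exist functions $f,d:\mathbb{N}\to\mathbb{N}$ such that for every $r\in\mathbb{N}$, every $G\in\mathcal{C}$ and every $v\in V(G)$, the set $N_r^G(v)$ contains at most $f(r)$ vertices whose degree in $G$ is larger than $d(r)$. *)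

(* Defs.v *)
From mathcomp Require Import all_boot.
Set Implicit Arguments. Unset Strict Implicit. Unset Printing Implicit Defensive.

Record graph := Graph {
  vt :> finType;
  gadj : rel vt;
  gadj_sym : symmetric gadj;
  gadj_irr : irreflexive gadj }.

Definition graph_class := graph -> Prop.

Definition deg (G : graph) (v : G) : nat := #|[set w | gadj v w]|.

Fixpoint ball (G : graph) (r : nat) (v : G) : {set G} :=
  match r with
  | 0 => [set v]
  | k.+1 => ball k v :|: [set w | [exists x in ball k v, gadj x w]]
  end.

(* r-shallow topological minor: an injective branch map f and, for every edge
   uv of H, a path in G from f u to f v whose internal vertices p u v
   (at most r of them) are distinct, avoid the branch vertices, and are
   disjoint from the internal vertices of the paths of all other edges. *)
Definition shallow_topminor (r : nat) (H G : graph) : Prop :=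
  exists (f : H -> G) (p : H -> H -> seq G),
    injective f /\
    (forall u v, gadj u v ->
       [/\ path (@gadj G) (f u) (rcons (p u v) (f v)),
           uniq (p u v), size (p u v) <= r &
           forall x, x \in p u v -> x \notin codom f]) /\
    (forall u v u' v', gadj u v -> gadj u' v' -> [set u; v] != [set u'; v'] ->
       forall x, x \in p u v -> x \notin p u' v').

(* The rooted tree T_{d,m}: vertices are words over 'I_m of length <= d
   (the root is the empty word); a word of length k is joined to its
   extensions by one letter. *)
Definition tvert (d m : nat) := {k : 'I_d.+1 & k.-tuple 'I_m}.

Definition tchild (d m : nat) (x y : tvert d m) : bool :=
  (tag y == (tag x).+1 :> nat) && (val (tagged x) == take (tag x) (val (tagged y))).

Definition tadj (d m : nat) : rel (tvert d m) :=
  fun x y => tchild x y || tchild y x.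

Lemma tadj_sym d m : symmetric (@tadj d m).
Proof. by move=> x y; rewrite /tadj orbC. Qed.

Lemma tadj_irr d m : irreflexive (@tadj d m).
Proof. by move=> x; rewrite /tadj orbb /tchild (ltn_eqF (ltnSn _)). Qed.

Definition tree (d m : nat) : graph := Graph (@tadj_sym d m) (@tadj_irr d m).

Definition tree_rank_le (C : graph_class) (d : nat) : Prop :=
  forall r : nat, exists m : nat, forall G : graph, C G -> ~ shallow_topminor r (tree d m) G.

Definition locally_almost_bounded_degree (C : graph_class) : Prop :=
  exists f dd : nat -> nat, forall (r : nat) (G : graph) (v : G), C G ->
    #|[set w in ball r v | dd r < deg w]| <= f r.

(* Main.v *)
Require Import Defs.
From mathcomp Require Import all_boot zify.
From Stdlib Require Import ClassicalEpsilon.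
Set Implicit Arguments. Unset Strict Implicit. Unset Printing Implicit Defensive.

Section Balls.
Variable G : graph.

Lemma ball_sub (k n : nat) (v : G) : k <= n -> ball k v \subset ball n v.
Proof.
elim: n => [|n IH]; first by rewrite leqn0 => /eqP ->.
rewrite leq_eqVlt => /orP[/eqP -> //|/IH Hk].
by apply: subset_trans Hk (subsetUl _ _).
Qed.

Lemma ball_adj k (v u w : G) : u \in ball k v -> gadj u w -> w \in ball k.+1 v.
Proof.
move=> Hu Huw /=; rewrite inE; apply/orP; right; rewrite inE.
by apply/existsP; exists u; rewrite Hu.
Qed.

Lemma ball_path (a : G) s : path (@gadj G) a s -> last a s \in ball (size s) a.
Proof.
elim/last_ind: s => [|s b IH]; first by rewrite /= inE.
rewrite rcons_path last_rcons size_rcons => /andP[/IH H Hb]; exact: ball_adj H Hb.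
Qed.

Lemma ball_back k (v w : G) : w \in ball k.+1 v -> w \notin ball k v ->
  exists2 u, u \in ball k v & gadj u w.
Proof.
rewrite /= inE => /orP[->//|]; rewrite inE => /existsP[u /andP[Hu Huw]] _.
by exists u.
Qed.

End Balls.

Lemma path_head (T : Type) (e : rel T) x s y : path e x (rcons s y) -> e x (head y s).
Proof. by case: s => [|z s] /= /andP[]. Qed.

Section Words.
Variable m : nat.
Definition w (u : tvert 2 m) : seq 'I_m := val (tagged u).
Lemma size_w u : size (w u) = tag u.
Proof. by rewrite /w size_tuple. Qed.
Lemma w_inj : injective w.
Proof.
case=> [k t] [k' t']; rewrite /w /= => H.
have Hk : k = k' by apply: val_inj; rewrite /= -(size_tuple t) -(size_tuple t') H.
subst k'; congr existT; exact: val_inj.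
Qed.
Definition mk (s : seq 'I_m) (Hs : size s < 3) : tvert 2 m :=
  existT (fun k : 'I_3 => k.-tuple 'I_m) (Ordinal Hs) (in_tuple s).
Lemma w_mk s Hs : w (@mk s Hs) = s.
Proof. by []. Qed.
Lemma tchildP u v : tchild u v <-> exists a, w v = rcons (w u) a.
Proof.
rewrite /tchild; split.
  move=> /andP[/eqP Hs /eqP Ht].
  have {}Hs : size (w v) = (size (w u)).+1 by rewrite !size_w.
  have {}Ht : w u = take (size (w u)) (w v) by rewrite size_w.
  have : size (drop (size (w u)) (w v)) = 1 by rewrite size_drop Hs; lia.
  have := cat_take_drop (size (w u)) (w v).
  case: (drop _ _) => [|z [|]] // <- _; exists z; by rewrite -Ht cats1.
move=> [a Ha]; apply/andP; split.
  by rewrite -!size_w Ha size_rcons.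
apply/eqP; change (w u = take (tag u) (w v)).
have -> : nat_of_ord (tag u) = size (w u) by rewrite size_w.
by rewrite Ha -cats1 take_size_cat.
Qed.
Lemma w_size3 u : size (w u) < 3.
Proof. by rewrite size_w. Qed.
Lemma edgeP u t : tadj u t ->
  (w u = [::] /\ exists a, w t = [:: a]) \/ (w t = [::] /\ exists a, w u = [:: a]) \/
  (exists a b, w u = [:: a] /\ w t = [:: a; b]) \/
  (exists a b, w t = [:: a] /\ w u = [:: a; b]).
Proof.
have H3 := w_size3.
case/orP => /tchildP [c Hc].
- have := H3 t; rewrite Hc size_rcons; case Eu: (w u) => [|a [|b l]] //= _.
  + by left; split => //; exists c.
  + by right; right; left; exists a, c.
- have := H3 u; rewrite Hc size_rcons; case Et: (w t) => [|a [|b l]] //= _.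
  + by right; left; split => //; exists c.
  + by right; right; right; exists a, c.
Qed.
End Words.

Lemma lab_to_tr C : locally_almost_bounded_degree C -> tree_rank_le C 2.
Proof.
move=> [f [dd H]] r.
exists (maxn (dd r.+1) (f r.+1)).+1 => G CG [phi [p [inj [Hp Hdisj]]]].
set m := (maxn (dd r.+1) (f r.+1)).+1.
pose R : tree 2 m := @mk m [::] isT.
pose ch (a : 'I_m) : tree 2 m := @mk m [:: a] isT.
pose gc (a b : 'I_m) : tree 2 m := @mk m [:: a; b] isT.
have ch_inj : injective ch by move=> a b /(congr1 (@w m)) [].
have eR a : gadj R (ch a) by apply/orP; left; apply/tchildP; exists a.
have ec a b : gadj (ch a) (gc a b) by apply/orP; left; apply/tchildP; exists b.
have Hball a : phi (ch a) \in ball r.+1 (phi R).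
  have [Hpa _ Hs _] := Hp _ _ (eR a).
  have := ball_path Hpa; rewrite last_rcons size_rcons => Hb.
  by apply: (subsetP (ball_sub _ _)) Hb.
have Hdeg a : dd r.+1 < deg (phi (ch a)).
  pose nb b := head (phi (gc a b)) (p (ch a) (gc a b)).
  have nb_inj : injective nb.
    move=> b b' Hbb; apply/eqP; apply/negPn/negP => Hne.
    have Hset : [set ch a; gc a b] != [set ch a; gc a b'].
      apply/negP => /eqP /setP /(_ (gc a b)); rewrite !inE eqxx orbT.
      move=> /esym /orP[] /eqP /(congr1 (@w m)) //= [] /eqP; by rewrite (negbTE Hne).
    have H1 := Hdisj _ _ _ _ (ec a b) (ec a b') Hset.
    have [_ _ _ Hc1] := Hp _ _ (ec a b).
    have [_ _ _ Hc2] := Hp _ _ (ec a b').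
    move: Hbb; rewrite /nb.
    case E1: (p (ch a) (gc a b)) => [|z1 s1]; case E2: (p (ch a) (gc a b')) => [|z2 s2] /=.
    - move/inj => /(congr1 (@w m)) [] /eqP; by rewrite (negbTE Hne).
    - move=> Hz; have := Hc2 z2; rewrite E2 mem_head -Hz codom_f; by move/(_ isT).
    - move=> Hz; have := Hc1 z1; rewrite E1 mem_head Hz codom_f; by move/(_ isT).
    - move=> Hz; have := H1 z1; rewrite E1 E2 mem_head Hz mem_head; by move/(_ isT).
  have Hsub : [set nb b | b : 'I_m] \subset [set w0 | gadj (phi (ch a)) w0].
    apply/subsetP => z /imsetP[b _ ->]; rewrite inE.
    by have [Hpa _ _ _] := Hp _ _ (ec a b); apply: path_head Hpa.
  have := subset_leq_card Hsub; rewrite card_imset // card_ord /deg.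
  rewrite /m; lia.
have Hsub : [set phi (ch a) | a : 'I_m] \subset
    [set w0 in ball r.+1 (phi R) | dd r.+1 < deg w0].
  by apply/subsetP => z /imsetP[a _ ->]; rewrite inE Hball Hdeg.
have := subset_leq_card Hsub.
rewrite card_imset; last by move=> a b /inj /ch_inj.
have := H r.+1 G (phi R) CG.
rewrite card_ord /m; lia.
Qed.


Section BFS.
Variables (G : graph) (v : G) (r : nat).

Definition lev (u : G) := find (fun k => u \in ball k v) (iota 0 r.+1).

Lemma levP u : u \in ball r v -> forall k, (u \in ball k v) = (lev u <= k).
Proof.
move=> Hu.
have Hh : has (fun k => u \in ball k v) (iota 0 r.+1).
  by apply/hasP; exists r; [rewrite mem_iota; lia | exact: Hu].
have Hl : lev u < r.+1 by rewrite -[r.+1](size_iota 0) -has_find.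
have Hin : u \in ball (lev u) v.
  by have := nth_find 0 Hh; rewrite nth_iota.
move=> k; case: (leqP (lev u) k) => Hk.
  exact: (subsetP (ball_sub _ Hk)).
have := before_find 0 Hk; rewrite nth_iota ?add0n; [by [] | lia].
Qed.

Lemma lev_le u : u \in ball r v -> lev u <= r.
Proof. by move=> Hu; rewrite -levP. Qed.

Lemma lev_ball u : u \in ball r v -> u \in ball (lev u) v.
Proof. by move=> Hu; rewrite levP. Qed.

Lemma lev0 u : u \in ball r v -> lev u = 0 -> u = v.
Proof. by move=> Hu H0; have := lev_ball Hu; rewrite H0 /= inE => /eqP. Qed.

Definition par (u : G) : G :=
  if lev u is k.+1 then odflt u [pick x | (x \in ball k v) && gadj x u] else u.

Lemma parP u : u \in ball r v -> 0 < lev u ->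
  [/\ par u \in ball r v, gadj (par u) u & lev (par u) = (lev u).-1].
Proof.
move=> Hu; rewrite /par; case E: (lev u) => [|k] // _.
have Hk1 : u \in ball k.+1 v by rewrite levP // E.
have Hk : u \notin ball k v by rewrite levP // E ltnn.
have [x Hx Hxu] := ball_back Hk1 Hk.
case: pickP => [y /andP[Hy Hyu]|/(_ x)]; last by rewrite Hx Hxu.
have Hyr : y \in ball r v.
  by apply: (subsetP (ball_sub _ _)) Hy; have := lev_le Hu; lia.
split => //=.
apply/eqP; rewrite eqn_leq -levP // Hy /=.
have := ball_adj Hyr Hyu; rewrite levP // E ltnS.
by have := ball_adj (lev_ball Hyr) Hyu; rewrite levP // E ltnS.
Qed.

Lemma iterP n u : u \in ball r v -> n <= lev u ->
  iter n par u \in ball r v /\ lev (iter n par u) = lev u - n.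
Proof.
move=> Hu; elim: n => [|n IH] Hn; first by rewrite subn0.
have [H1 H2] := IH (ltnW Hn).
have Hp : 0 < lev (iter n par u) by rewrite H2; lia.
have [H3 _ H4] := parP H1 Hp.
by rewrite iterS; split => //; rewrite H4 H2; lia.
Qed.

Fixpoint down d (s : G) : seq G :=
  if d is d'.+1 then rcons (down d' (par s)) s else [::].

Lemma size_down d s : size (down d s) = d.
Proof. by elim: d s => [|d IH] s //=; rewrite size_rcons IH. Qed.

Lemma last_down d s : last (iter d par s) (down d s) = s.
Proof. by case: d => [|d] //=; rewrite last_rcons. Qed.

Lemma down_path d s : s \in ball r v -> d <= lev s ->
  path (@gadj G) (iter d par s) (down d s).
Proof.
elim: d s => [|d IH] s Hs Hd //=.
have Hp : 0 < lev s by lia.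
have [H1 H2 H3] := parP Hs Hp.
rewrite -iterS iterSr rcons_path IH; last 2 first; [by [] | by rewrite H3; lia | ].
by rewrite last_down.
Qed.

Lemma mem_down z d s : z \in down d s -> exists2 n, n < d & z = iter n par s.
Proof.
elim: d s => [|d IH] s //=; rewrite mem_rcons inE => /orP[/eqP ->|].
  by exists 0.
by move/IH => [n Hn ->]; exists n.+1 => //; rewrite iterSr.
Qed.

Lemma down_uniq d s : s \in ball r v -> d <= lev s -> uniq (down d s).
Proof.
elim: d s => [|d IH] s Hs Hd //=.
have Hp : 0 < lev s by lia.
have [H1 H2 H3] := parP Hs Hp.
rewrite rcons_uniq IH //; last by rewrite H3; lia.
rewrite andbT; apply/negP => /mem_down [n Hn Hz].
have [_ H4] := iterP H1 (n:=n) (ltac:(rewrite H3; lia)).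
by move: H4; rewrite -Hz H3; lia.
Qed.

End BFS.


Section Count.
Variables (G : graph) (v : G) (r m : nat) (S : {set G}).
Hypothesis S_ball : S \subset ball r v.
Local Notation lev := (lev v r).
Local Notation par := (par v r).

Definition isanc u x := (lev u <= lev x) && (iter (lev x - lev u) par x == u).
Definition T := [set u | [exists x in S, isanc u x]].
Definition Ch x := [set y in T | (0 < lev y) && (par y == x)].

Lemma T_ball u : u \in T -> u \in ball r v.
Proof.
rewrite inE => /existsP[x /andP[Hx /andP[Hl /eqP <-]]].
have Hxb := subsetP S_ball _ Hx.
by have [] := iterP Hxb (leq_subr (lev u) (lev x)).
Qed.

Lemma T_par u : u \in T -> 0 < lev u -> par u \in T.
Proof.
move=> Hu Hl; have [H1 H2 H3] := parP (T_ball Hu) Hl.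
move: Hu; rewrite !inE => /existsP[x /andP[Hx /andP[Hle /eqP Hi]]].
apply/existsP; exists x; rewrite Hx /= /isanc H3.
apply/andP; split; first by lia.
have -> : lev x - (lev u).-1 = (lev x - lev u).+1 by lia.
by rewrite iterS Hi eqxx.
Qed.

Lemma S_T : S \subset T.
Proof.
apply/subsetP => u Hu; rewrite inE; apply/existsP; exists u.
by rewrite Hu /isanc leqnn subnn eqxx.
Qed.

Definition A k := [set u in T | lev u == k].
Definition B k := [set u in T | lev u <= k].

Lemma inA u k : (u \in A k) = (u \in T) && (lev u == k).
Proof. by rewrite /A in_set. Qed.
Lemma inB u k : (u \in B k) = (u \in T) && (lev u <= k).
Proof. by rewrite /B in_set. Qed.
Lemma inCh u x : (u \in Ch x) = [&& u \in T, 0 < lev u & par u == x].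
Proof. by rewrite /Ch in_set. Qed.

Hypothesis Hc : forall x, x \in T -> #|Ch x| <= m.

Lemma A0 : #|A 0| <= 1.
Proof.
rewrite -(cards1 v); apply: subset_leq_card; apply/subsetP => u.
rewrite !inE => /andP[Hu /eqP H0]; apply/eqP; apply: lev0 H0; apply: T_ball; by rewrite inE.
Qed.

Lemma AS k : #|A k.+1| <= m * #|A k|.
Proof.
rewrite -sum1_card (partition_big par (mem (A k))).
  rewrite mulnC -sum_nat_const; apply: leq_sum => x Hx.
  have {}Hx : x \in A k := Hx.
  have HxT : x \in T by move: Hx; rewrite inA => /andP[].
  rewrite sum1dep_card; apply: leq_trans (Hc HxT).
  apply: subset_leq_card; apply/subsetP => y; rewrite in_set inCh inA.
  by move=> /andP[/andP[Hy /eqP Hl] Hp]; rewrite Hy Hp Hl.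
move=> y Hy; have {}Hy : y \in A k.+1 := Hy.
move: Hy; rewrite inA => /andP[Hy /eqP Hl].
have Hl0 : 0 < lev y by rewrite Hl.
have [_ _ H3] := parP (T_ball Hy) Hl0.
by rewrite -[mem (A k) _]/(par y \in A k) inA T_par // H3 Hl /= eqxx.
Qed.

Lemma Abound k : #|A k| <= m ^ k.
Proof.
elim: k => [|k IH]; first exact: A0.
by rewrite expnS; apply: leq_trans (AS k) _; rewrite leq_mul2l IH orbT.
Qed.

Lemma Bbound k : #|B k| <= \sum_(i < k.+1) m ^ i.
Proof.
elim: k => [|k IH].
  rewrite big_ord_recr big_ord0 /=; apply: leq_trans (Abound 0).
  by apply: subset_leq_card; apply/subsetP => u; rewrite inA inB leqn0.
rewrite big_ord_recr /=.
have -> : B k.+1 = B k :|: A k.+1.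
  by apply/setP => u; rewrite in_setU inA !inB leq_eqVlt ltnS; case: (u \in T); rewrite //= orbC.
apply: leq_trans (leq_card_setU _ _).1 _.
by apply: leq_add => //; apply: Abound.
Qed.

Lemma Sbound : #|S| <= \sum_(i < r.+1) m ^ i.
Proof.
apply: leq_trans (Bbound r); apply: subset_leq_card; apply/subsetP => u Hu.
have HT := subsetP S_T _ Hu.
by rewrite inB HT /=; apply: lev_le (T_ball HT).
Qed.

End Count.

Lemma many_children (G : graph) (v : G) (r m : nat) (S : {set G}) :
  S \subset ball r v -> \sum_(i < r.+1) m ^ i < #|S| ->
  exists2 x, x \in T v r S & m < #|Ch v r S x|.
Proof.
move=> Hsub Hlt.
case: (boolP [exists x in T v r S, m < #|Ch v r S x|]).
  by move=> /existsP[x /andP[Hx Hm]]; exists x.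
rewrite negb_exists => /forallP Hall.
have Hc : forall x, x \in T v r S -> #|Ch v r S x| <= m.
  by move=> x Hx; have := Hall x; rewrite Hx /= -leqNgt.
by have := Sbound Hsub Hc; rewrite leqNgt Hlt.
Qed.


Definition greedy_ok (G : graph) (c : nat -> G) (U : seq G) (m k : nat)
  (g : nat -> nat -> G) :=
  [/\ forall j i, j < k -> i < m -> gadj (c j) (g j i),
      forall j i, j < k -> i < m -> g j i \notin U &
      forall j i j' i', j < k -> i < m -> j' < k -> i' < m ->
        g j i = g j' i' -> j = j' /\ i = i'].

Lemma greedy (G : graph) (c : nat -> G) (U : seq G) (m K : nat) :
  (forall j, j < K -> size U + K * m <= deg (c j)) ->
  exists g, greedy_ok c U m K g.
Proof.
move=> Hdeg.
suff : forall k, k <= K -> exists g, greedy_ok c U m k g by apply.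
elim=> [|k IH] Hk.
  by exists (fun _ _ => c 0); split => //.
have [g [g1 g2 g3]] := IH (ltnW Hk).
pose Img := [set g (nat_of_ord p.1) (nat_of_ord p.2) | p : 'I_k * 'I_m].
pose E := [set z | gadj (c k) z && ((z \notin U) && (z \notin Img))].
have HE : m <= #|E|.
  have Hsub : [set z | gadj (c k) z] \subset E :|: ([set z in U] :|: Img).
    apply/subsetP => z; rewrite !in_set.
    by case: (gadj _ _) => //=; case: (z \in U); case: (z \in Img).
  have := subset_leq_card Hsub.
  have h1 := (leq_card_setU E ([set z in U] :|: Img)).1.
  have h2 := (leq_card_setU [set z in U] Img).1.
  have h3 : #|[set z in U]| <= size U by rewrite cardsE card_size.
  have h4 : #|Img| <= k * m by apply: leq_trans (leq_imset_card _ _) _; rewrite card_prod !card_ord.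
  have h5 := Hdeg k Hk.
  rewrite /deg in h5.
  have h6 : k * m + m <= K * m by rewrite addnC -mulSn leq_mul2r Hk orbT.
  lia.
pose g' j i := if j < k then g j i else nth (c k) (enum E) i.
have HnE i : i < m -> nth (c k) (enum E) i \in E.
  by move=> Hi; rewrite -mem_enum mem_nth // -cardE; lia.
exists g'; split.
- move=> j i Hj Hi; rewrite /g'; case: ltnP => Hjk; first exact: g1.
  have -> : j = k by lia.
  by have := HnE i Hi; rewrite in_set => /andP[].
- move=> j i Hj Hi; rewrite /g'; case: ltnP => Hjk; first exact: g2.
  by have := HnE i Hi; rewrite in_set => /and3P[].
- move=> j i j' i' Hj Hi Hj' Hi'; rewrite /g'.
  case: (ltnP j k) => Hjk; case: (ltnP j' k) => Hjk'.
  + exact: g3.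
  + move=> Heq; have := HnE i' Hi'; rewrite in_set -Heq => /and3P[_ _].
    by move/negP; case; apply/imsetP; exists (Ordinal Hjk, Ordinal Hi).
  + move=> Heq; have := HnE i Hi; rewrite in_set Heq => /and3P[_ _].
    by move/negP; case; apply/imsetP; exists (Ordinal Hjk', Ordinal Hi').
  + move/eqP; rewrite nth_uniq ?enum_uniq -?cardE; [|lia|lia|exact: isT].
    move/eqP => ->; split; lia.
Qed.


Lemma sumn_le (s : seq nat) B : all (fun a => a <= B) s -> sumn s <= size s * B.
Proof. elim: s => [|a s IH] //= /andP[Ha /IH Hs]; rewrite mulSn; lia. Qed.

Section Main.
Variables (G : graph) (v : G) (r m : nat).
Let D := (1 + m * r.+1) + m * m.
Let S := [set u in ball r v | D < deg u].
Hypothesis HS : \sum_(i < r.+1) m ^ i < #|S|.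
Local Notation lev := (lev v r).
Local Notation par := (par v r).

Lemma S_ball : S \subset ball r v.
Proof. by apply/subsetP => u; rewrite in_set => /andP[]. Qed.

Theorem main_minor : shallow_topminor r (tree 2 m) G.
Proof.
have [x HxT Hm] := many_children S_ball HS.
have Hxb := T_ball S_ball HxT.
pose y j := nth x (enum (Ch v r S x)) j.
have Hy j : j < m -> y j \in Ch v r S x.
  by move=> Hj; rewrite -mem_enum mem_nth // -cardE; lia.
have y_inj j j' : j < m -> j' < m -> y j = y j' -> j = j'.
  move=> Hj Hj' /eqP; rewrite nth_uniq ?enum_uniq -?cardE; [|lia|lia|exact: isT].
  by move/eqP.
have yP j : j < m -> [/\ y j \in T v r S, lev (y j) = (lev x).+1 & par (y j) = x].
  move=> Hj; have := Hy j Hj; rewrite inCh => /and3P[HT Hl /eqP Hp].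
  have [_ _ H3] := parP (T_ball S_ball HT) Hl.
  by split => //; move: H3; rewrite Hp; lia.
pose s j := odflt x [pick u in S | isanc v r (y j) u].
have sP j : j < m -> s j \in S /\ isanc v r (y j) (s j).
  move=> Hj; rewrite /s; case: pickP => [u /andP[Hu Ha]|Hn]; first by [].
  have [HT _ _] := yP j Hj.
  move: HT; rewrite /T in_set => /existsP[u /andP[Hu Ha]].
  by have := Hn u; rewrite Hu Ha.
have sb j : j < m -> s j \in ball r v.
  by move=> Hj; have [H _] := sP j Hj; apply: (subsetP S_ball).
have sdeg j : j < m -> D < deg (s j).
  by move=> Hj; have [H _] := sP j Hj; move: H; rewrite in_set => /andP[].
pose dj j := lev (s j) - lev (y j).
have djE j : dj j = lev (s j) - lev (y j) by [].
have siter j : j < m -> iter (dj j) par (s j) = y j /\ lev (y j) <= lev (s j).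
  by move=> Hj; have [_ /andP[H1 /eqP H2]] := sP j Hj.
have slev j : j < m -> lev (s j) <= r by move=> Hj; apply: lev_le (sb j Hj).
pose anc1 z := iter (lev z - (lev x).+1) par z.
have chain j n : j < m -> n <= dj j ->
    [/\ iter n par (s j) \in ball r v, lev (iter n par (s j)) = lev (s j) - n
      & anc1 (iter n par (s j)) = y j].
  move=> Hj Hn.
  have [Hi Hle] := siter j Hj.
  have [_ Hly _] := yP j Hj.
  have Hn' : n <= lev (s j) by rewrite /dj in Hn; lia.
  have [H1 H2] := iterP (sb j Hj) Hn'.
  split => //; rewrite /anc1 H2 -iterD -Hi; congr iter.
  rewrite /dj Hly in Hn *; lia.
pose q j := down v r (dj j) (par (s j)).
have memq j z : j < m -> z \in s j :: q j ->
    exists2 n, n <= dj j & z = iter n par (s j) /\ (z \in q j -> 0 < n).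
  move=> Hj; rewrite inE => /orP[/eqP ->|Hz].
    exists 0 => //; split => //.
    move=> Hin; have := mem_down Hin => -[n Hn Heq].
    have [H1 H2 _] := chain j n.+1 Hj Hn.
    by move: H2; rewrite iterSr -Heq; rewrite /dj in Hn; lia.
  have := mem_down Hz => -[n Hn Heq].
  by exists n.+1 => //; rewrite iterSr.
have chainz j z : j < m -> z \in s j :: q j ->
    [/\ lev x < lev z, (z \in q j -> lev z < lev (s j)) & anc1 z = y j].
  move=> Hj Hz; have [n Hn [-> Hq]] := memq j z Hj Hz.
  have [_ H2 H3] := chain j n Hj Hn.
  have [_ Hly _] := yP j Hj.
  have [_ Hle] := siter j Hj.
  split => //; rewrite H2.
    by move: Hn; rewrite djE Hly; lia.
  move=> /Hq Hn0; move: Hn; rewrite djE; lia.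
have disj j j' z : j < m -> j' < m -> z \in s j :: q j -> z \in s j' :: q j' -> j = j'.
  move=> Hj Hj' Hz Hz'.
  have [_ _ H1] := chainz j z Hj Hz.
  have [_ _ H2] := chainz j' z Hj' Hz'.
  by apply: y_inj Hj Hj' _; rewrite -H1 -H2.
have qpath j : j < m -> path (@gadj G) x (rcons (q j) (s j)).
  move=> Hj; have [Hi Hle] := siter j Hj.
  have [_ Hly Hpy] := yP j Hj.
  have := @down_path G v r (dj j).+1 (s j) (sb j Hj).
  rewrite iterS Hi Hpy /=; apply; rewrite /dj; lia.
have quniq j : j < m -> uniq (q j).
  move=> Hj; have [Hi Hle] := siter j Hj.
  have [_ Hly _] := yP j Hj.
  have Hp : 0 < lev (s j) by lia.
  have [H1 _ H3] := parP (sb j Hj) Hp.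
  by apply: down_uniq H1 _; rewrite H3 /dj; lia.
have qsize j : j < m -> size (q j) <= r.
  by move=> Hj; rewrite size_down /dj; have := slev j Hj; lia.
pose U := x :: flatten [seq s j :: q j | j <- iota 0 m].
have memU j z : j < m -> z \in s j :: q j -> z \in U.
  move=> Hj Hz; rewrite inE; apply/orP; right; apply/flatten_mapP.
  by exists j => //; rewrite mem_iota; lia.
have sizeU : size U <= 1 + m * r.+1.
  rewrite /= size_flatten /shape -map_comp.
  have := @sumn_le [seq (size \o (fun j => s j :: q j)) i | i <- iota 0 m] r.+1.
  rewrite size_map size_iota mulnC; move=> H; apply: H.
  apply/allP => a /mapP[j]; rewrite mem_iota => /andP[_ Hj] -> /=.
  by have := qsize j Hj; lia.
have Hgd : forall j, j < m -> size U + m * m <= deg (s j).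
  move=> j Hj; have := sdeg j Hj; have HD : D = 1 + m * r.+1 + m * m by [].
  lia.
have [g [g1 g2 g3]] := @greedy G s U m m Hgd.
pose f (u : tree 2 m) : G :=
  match @w m u with [::] => x | [:: a] => s a | a :: b :: _ => g a b end.
pose p (u t : tree 2 m) : seq G :=
  match @w m u, @w m t with
  | [::], [:: a] => q a
  | [:: a], [::] => rev (q a)
  | _, _ => [::] end.
have xU : x \in U by rewrite mem_head.
have sU (a : 'I_m) : s a \in U by apply: (memU a) => //; rewrite mem_head.
have qU (a : 'I_m) z : z \in q a -> z \in U.
  by move=> Hz; apply: (memU a) => //; rewrite inE Hz orbT.
have gU (a b : 'I_m) : g a b \notin U by apply: g2.
have xs (a : 'I_m) : x = s a -> False.
  move=> Hxs; have [H _ _] := chainz a (s a) (ltn_ord a) (mem_head _ _).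
  by move: H; rewrite -Hxs ltnn.
have xg (a b : 'I_m) : x = g a b -> False.
  by move=> Hxg; have := gU a b; rewrite -Hxg xU.
have sg (a a' b' : 'I_m) : s a = g a' b' -> False.
  by move=> Hsg; have := gU a' b'; rewrite -Hsg sU.
have ss (a a' : 'I_m) : s a = s a' -> a = a'.
  move=> Hss; apply: val_inj; apply: (disj a a' (s a)) => //; first by rewrite mem_head.
  by rewrite Hss mem_head.
have gg (a b a' b' : 'I_m) : g a b = g a' b' -> a = a' /\ b = b'.
  by move=> Hgg; have [H1 H2] := g3 _ _ _ _ (ltn_ord a) (ltn_ord b) (ltn_ord a') (ltn_ord b') Hgg; split; apply: val_inj.
have ncod (a : 'I_m) z : z \in q a -> z \notin codom f.
  move=> Hz; have Hz1 : z \in s a :: q a by rewrite inE Hz orbT.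
  have [H1 H2 _] := chainz a z (ltn_ord a) Hz1.
  apply/negP => /codomP [u' Hu']; move: Hu'; rewrite /f.
  case: (w u') => [|a' [|b' l]] Hu'.
  - by move: H1; rewrite Hu' ltnn.
  - have Haa : (a : nat) = a' by apply: (disj a a' z) => //; rewrite Hu' mem_head.
    have := H2 Hz; rewrite Hu' -(val_inj Haa) ltnn; exact: id.
  - by have := qU a z Hz; rewrite Hu' (negbTE (gU _ _)).
have Hsym : (fun z1 z2 : G => gadj z2 z1) =2 (@gadj G) by move=> z1 z2; rewrite gadj_sym.
have Pcase u t : tadj u t -> forall z, z \in p u t -> exists a : 'I_m,
    z \in q a /\ ((@w m u = [::] /\ @w m t = [:: a]) \/ (@w m u = [:: a] /\ @w m t = [::])).
  move=> Hut z; have := @edgeP m u t Hut.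
  case => [[Eu [a Et]] | [[Et [a Eu]] | [[a [b [Eu Et]]] | [a [b [Et Eu]]]]]];
    rewrite /p Eu Et //= => Hz.
  - by exists a; split => //; left.
  - by exists a; split; [rewrite -mem_rev | right].
exists f, p; split.
  move=> u u' Hf; apply: (@w_inj m); move: Hf; rewrite /f.
  have := @w_size3 m u; have := @w_size3 m u'.
  case: (w u') => [|a' [|b' [|? ?]]]; case: (w u) => [|a [|b [|? ?]]] //= _ _ Hf;
  first [ done
        | by rewrite (ss _ _ Hf)
        | by case: (gg _ _ _ _ Hf) => -> ->
        | by case: (xs _ Hf) | by case: (xs _ (esym Hf))
        | by case: (xg _ _ Hf) | by case: (xg _ _ (esym Hf))
        | by case: (sg _ _ _ Hf) | by case: (sg _ _ _ (esym Hf)) ].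
split.
  move=> u t Hut; have := @edgeP m u t Hut.
  case => [[Eu [a Et]] | [[Et [a Eu]] | [[a [b [Eu Et]]] | [a [b [Et Eu]]]]]];
    rewrite /p /f Eu Et /=.
  - split; [exact: qpath | exact: quniq | exact: qsize | exact: ncod].
  - split.
    + have := rev_path (@gadj G) x (rcons (q a) (s a)).
      rewrite last_rcons belast_rcons rev_cons => ->.
      rewrite (eq_path Hsym); exact: qpath.
    + by rewrite rev_uniq; apply: quniq.
    + by rewrite size_rev; apply: qsize.
    + by move=> z; rewrite mem_rev; apply: ncod.
  - by split => //; rewrite andbT; apply: g1.
  - by split => //; rewrite andbT gadj_sym; apply: g1.
move=> u t u' t' Hut Hut' Hne z Hz; apply/negP => Hz'.
have [a [Ha Hc]] := Pcase u t Hut z Hz.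
have [a' [Ha' Hc']] := Pcase u' t' Hut' z Hz'.
have Haa : a = a'.
  apply: val_inj; apply: (disj a a' z) => //; by rewrite inE ?Ha ?Ha' orbT.
subst a'; move: Hne.
case: Hc => [[Eu Et]|[Eu Et]]; case: Hc' => [[Eu' Et']|[Eu' Et']].
- have -> : u' = u by apply: (@w_inj m); rewrite Eu Eu'.
  have -> : t' = t by apply: (@w_inj m); rewrite Et Et'.
  by rewrite eqxx.
- have -> : u' = t by apply: (@w_inj m); rewrite Et Eu'.
  have -> : t' = u by apply: (@w_inj m); rewrite Eu Et'.
  by rewrite setUC eqxx.
- have -> : u' = t by apply: (@w_inj m); rewrite Et Eu'.
  have -> : t' = u by apply: (@w_inj m); rewrite Eu Et'.
  by rewrite setUC eqxx.
- have -> : u' = u by apply: (@w_inj m); rewrite Eu Eu'.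
  have -> : t' = t by apply: (@w_inj m); rewrite Et Et'.
  by rewrite eqxx.
Qed.
End Main.


Lemma tr_to_lab C : tree_rank_le C 2 -> locally_almost_bounded_degree C.
Proof.
move=> H.
have HM : forall r, {m | forall G, C G -> ~ shallow_topminor r (tree 2 m) G}.
  by move=> r; apply: constructive_indefinite_description; apply: H.
pose M r := sval (HM r).
exists (fun r => \sum_(i < r.+1) M r ^ i), (fun r => (1 + M r * r.+1) + M r * M r).
move=> r G v CG; rewrite leqNgt; apply/negP => Hlt.
exact: (svalP (HM r) G CG (main_minor Hlt)).
Qed.

Theorem lemma5p2 (C : graph_class) :
  tree_rank_le C 2 <-> locally_almost_bounded_degree C.
Proof. split; [exact: tr_to_lab | exact: lab_to_tr]. Qed.
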